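(* Let $G$ be a hereditarily normal topological group that contains a non-trivial convergent sequence. Then $G$ has a $G_\delta$-diagonal.
   Context: All spaces are assumed to be $T_1$. A space $X$ has a $G_\delta$-diagonal if $\{\langle x,x\rangle : x\in X\}$ is the intersection of a countable family of open subsets of $X\times X$. A non-trivial convergent sequence is a subspace homeomorphic to the subspace $\{0\}\cup\{1/n : n=1,2,3,\dots\}$ of the real line. *)

(* Defs.v *)
From Stdlib Require Import Reals.
Open Scope R_scope.

Definition is_topology {X : Type} (op : (X -> Prop) -> Prop) : Prop :=
  op (fun _ => True) /\
  (forall U V, op U -> op V -> op (fun x => U x /\ V x)) /\
  (forall (I : Type) (F : I -> X -> Prop),
      (forall i, op (F i)) -> op (fun x => exists i, F i x)).

Definition T1_space {X : Type} (op : (X -> Prop) -> Prop) : Prop :=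
  forall x y : X, x <> y -> exists U, op U /\ U x /\ ~ U y.

Definition closed_set {X : Type} (op : (X -> Prop) -> Prop) (A : X -> Prop) : Prop :=
  op (fun x => ~ A x).

(* Normal: disjoint closed sets are separated by disjoint open sets
   (T1 is a standing assumption, inherited by subspaces). *)
Definition normal_space {X : Type} (op : (X -> Prop) -> Prop) : Prop :=
  forall A B : X -> Prop, closed_set op A -> closed_set op B ->
    (forall x, A x -> B x -> False) ->
    exists U V : X -> Prop, op U /\ op V /\
      (forall x, A x -> U x) /\ (forall x, B x -> V x) /\
      (forall x, U x -> V x -> False).

Definition subspace_top {X : Type} (op : (X -> Prop) -> Prop) (S : X -> Prop)
  : ({x : X | S x} -> Prop) -> Prop :=
  fun V => exists U, op U /\ forall y : {x : X | S x}, V y <-> U (proj1_sig y).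

Definition hereditarily_normal {X : Type} (op : (X -> Prop) -> Prop) : Prop :=
  forall S : X -> Prop, normal_space (subspace_top op S).

Definition prod_top {X Y : Type} (opX : (X -> Prop) -> Prop) (opY : (Y -> Prop) -> Prop)
  : (X * Y -> Prop) -> Prop :=
  fun W => forall p, W p -> exists A B, opX A /\ opY B /\ A (fst p) /\ B (snd p) /\
             (forall q, A (fst q) -> B (snd q) -> W q).

Definition continuous {X Y : Type} (opX : (X -> Prop) -> Prop) (opY : (Y -> Prop) -> Prop)
  (f : X -> Y) : Prop :=
  forall V, opY V -> opX (fun x => V (f x)).

Definition embedding {X Y : Type} (opX : (X -> Prop) -> Prop) (opY : (Y -> Prop) -> Prop)
  (f : X -> Y) : Prop :=
  (forall x x', f x = f x' -> x = x') /\ continuous opX opY f /\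
  (forall V, opX V -> exists U, opY U /\ forall x, V x <-> U (f x)).

Definition is_group {G : Type} (mul : G -> G -> G) (inv : G -> G) (e : G) : Prop :=
  (forall x y z, mul x (mul y z) = mul (mul x y) z) /\
  (forall x, mul e x = x) /\ (forall x, mul x e = x) /\
  (forall x, mul (inv x) x = e) /\ (forall x, mul x (inv x) = e).

(* Topological group (T1 is a standing assumption of the paper). *)
Definition is_topological_group {G : Type} (op : (G -> Prop) -> Prop)
  (mul : G -> G -> G) (inv : G -> G) (e : G) : Prop :=
  is_topology op /\ T1_space op /\ is_group mul inv e /\
  continuous (prod_top op op) op (fun p => mul (fst p) (snd p)) /\
  continuous op op inv.

Definition R_open (U : R -> Prop) : Prop :=
  forall x, U x -> exists eps, 0 < eps /\ forall y, Rabs (y - x) < eps -> U y.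

Definition conv_seq_set (x : R) : Prop :=
  x = 0 \/ exists n : nat, x = / INR (S n).

Definition conv_seq_space : Type := {x : R | conv_seq_set x}.

Definition conv_seq_top : (conv_seq_space -> Prop) -> Prop :=
  subspace_top R_open conv_seq_set.

(* X contains a subspace homeomorphic to {0} ∪ {1/n}. *)
Definition has_nontrivial_convergent_sequence {X : Type} (op : (X -> Prop) -> Prop) : Prop :=
  exists f : conv_seq_space -> X, embedding conv_seq_top op f.

Definition has_G_delta_diagonal {X : Type} (op : (X -> Prop) -> Prop) : Prop :=
  exists U : nat -> X * X -> Prop,
    (forall n, prod_top op op (U n)) /\
    (forall p : X * X, fst p = snd p <-> forall n, U n p).

(* Main.v *)
Require Import Defs.
From Stdlib Require Import Reals Lra Lia Classical FunctionalExtensionality PropExtensionality.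
Open Scope R_scope.

Lemma op_ext {X : Type} (op : (X -> Prop) -> Prop) (U V : X -> Prop) :
  op U -> (forall x, U x <-> V x) -> op V.
Proof.
  intros H E. replace V with U; auto.
  apply functional_extensionality; intro x; apply propositional_extensionality; auto.
Qed.

Lemma open_nbhd {X : Type} (op : (X -> Prop) -> Prop) (Ht : is_topology op) (U : X -> Prop) :
  (forall x, U x -> exists V, op V /\ V x /\ forall y, V y -> U y) -> op U.
Proof.
  intros H. destruct Ht as [_ [_ Hu]].
  pose (I := {V : X -> Prop | op V /\ forall y, V y -> U y}).
  pose proof (Hu I (fun i => proj1_sig i) (fun i => proj1 (proj2_sig i))) as HH.
  apply (op_ext _ _ _ HH). intro x; split.
  - intros [[V [HV HVU]] Hx]; simpl in Hx; auto.
  - intros Hx. destruct (H x Hx) as [V [HV [HVx HVU]]].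
    exists (exist _ V (conj HV HVU)); simpl; auto.
Qed.

Lemma union_nat {X : Type} (op : (X -> Prop) -> Prop) (Ht : is_topology op)
  (P : nat -> Prop) (F : nat -> X -> Prop) :
  (forall m, op (F m)) -> op (fun x => exists m, P m /\ F m x).
Proof.
  intros H. apply open_nbhd; auto. intros x [m [Pm Fx]].
  exists (F m); split; [auto | split; auto]. intros y Hy; exists m; auto.
Qed.

Lemma rtrans {G : Type} (op : (G -> Prop) -> Prop) mul inv (e : G) :
  is_topological_group op mul inv e ->
  forall c V, op V -> op (fun h => V (mul h c)).
Proof.
  intros (Ht & T1 & Gr & Hm & Hi) c V HV. apply open_nbhd; auto. intros h Hh.
  destruct (Hm V HV (h, c) Hh) as [A [B [HA [HB [Ah [Bc Hq]]]]]].
  exists A. split; auto. split; auto. intros y Hy. exact (Hq (y, c) Hy Bc).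
Qed.

Lemma ltrans {G : Type} (op : (G -> Prop) -> Prop) mul inv (e : G) :
  is_topological_group op mul inv e ->
  forall c V, op V -> op (fun h => V (mul c h)).
Proof.
  intros (Ht & T1 & Gr & Hm & Hi) c V HV. apply open_nbhd; auto. intros h Hh.
  destruct (Hm V HV (c, h) Hh) as [A [B [HA [HB [Ac [Bh Hq]]]]]].
  exists B. split; auto. split; auto. intros y Hy. exact (Hq (c, y) Ac Hy).
Qed.

Lemma hausdorff_e {G : Type} (op : (G -> Prop) -> Prop) mul inv (e : G) :
  is_topological_group op mul inv e ->
  forall g, g <> e -> exists A B, op A /\ op B /\ A g /\ B e /\
     forall x, A x -> B x -> False.
Proof.
  intros TG g Hg.
  pose proof TG as (Ht & T1 & (Ga & Gl & Gr & Gil & Gir) & Hm & Hi).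
  destruct (T1 e g (fun E => Hg (eq_sym E))) as [U [HU [Ue Ug]]].
  assert (Uee : U (mul e e)) by (rewrite Gl; exact Ue).
  destruct (Hm U HU (e, e) Uee) as [A1 [B1 [HA1 [HB1 [A1e [B1e Hq]]]]]].
  simpl in A1e, B1e.
  exists (fun h => B1 (mul (inv h) g)), A1. split.
  - exact (Hi _ (rtrans op mul inv e TG g B1 HB1)).
  - split; auto. split. { simpl; rewrite Gil; auto. } split; auto.
    intros x Hx1 Hx2. apply Ug. specialize (Hq (x, mul (inv x) g) Hx2 Hx1).
    simpl in Hq. rewrite Ga, Gir, Gl in Hq. exact Hq.
Qed.

Lemma open_neq {G : Type} (op : (G -> Prop) -> Prop) (Ht : is_topology op) (T1 : T1_space op)
  (e : G) : op (fun x => x <> e).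
Proof.
  apply open_nbhd; auto. intros x Hx.
  destruct (T1 x e Hx) as [U [HU [Ux Ue]]].
  exists U; split; auto; split; auto. intros y Hy E; subst; auto.
Qed.

Lemma inv_small (eps : R) : 0 < eps ->
  exists N, forall n, (N <= n)%nat -> Rabs (/ INR (S n) - 0) < eps.
Proof.
  intros He. destruct (INR_unbounded (/ eps)) as [N HN]. exists N. intros n Hn.
  assert (HS : INR N <= INR (S n)) by (apply le_INR; lia).
  assert (Hp : 0 < / eps) by (apply Rinv_0_lt_compat; auto).
  assert (Hpos : 0 < / INR (S n)) by (apply Rinv_0_lt_compat; lra).
  rewrite Rminus_0_r, Rabs_right by lra.
  rewrite <- (Rinv_inv eps). apply Rinv_0_lt_contravar; lra.
Qed.

Lemma finite_avoid {G : Type} (op : (G -> Prop) -> Prop) (Ht : is_topology op)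
  (T1 : T1_space op) (z : nat -> G) (g : G) :
  (forall n, g <> z n) ->
  forall N, exists V, op V /\ V g /\ forall n, (n < N)%nat -> ~ V (z n).
Proof.
  intros Hg N. induction N as [|N IH].
  - exists (fun _ => True). destruct Ht as [H0 _]. split; auto. split; auto. intros; lia.
  - destruct IH as [V [HV [Vg HVn]]].
    destruct (T1 g (z N) (Hg N)) as [U [HU [Ug Uz]]].
    exists (fun x => V x /\ U x). destruct Ht as [_ [Hi _]]. split; auto. split; auto.
    intros n Hn [H1 H2]. destruct (Nat.eq_dec n N) as [->|Hne]; auto.
    apply (HVn n); auto; lia.
Qed.

Lemma avoid_seq {G : Type} (op : (G -> Prop) -> Prop) mul inv (e : G) :
  is_topological_group op mul inv e ->
  forall z : nat -> G,
  (forall W, op W -> W e -> exists N, forall n, (N <= n)%nat -> W (z n)) ->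
  forall g, g <> e -> (forall n, g <> z n) ->
  exists V, op V /\ V g /\ forall n, ~ V (z n).
Proof.
  intros TG z Hz g Hg Hgz.
  pose proof TG as (Ht & T1 & _ & _ & _).
  destruct (hausdorff_e op mul inv e TG g Hg) as [A [B [HA [HB [Ag [Be HAB]]]]]].
  destruct (Hz B HB Be) as [N HN].
  destruct (finite_avoid op Ht T1 z g Hgz N) as [V [HV [Vg HVn]]].
  exists (fun x => A x /\ V x). destruct Ht as [_ [Hi _]]. split; auto. split; auto.
  intros n [H1 H2]. destruct (Nat.lt_ge_cases n N) as [Hl|Hl].
  - exact (HVn n Hl H2).
  - exact (HAB _ H1 (HN n Hl)).
Qed.

Lemma seq_closed {G : Type} (op : (G -> Prop) -> Prop) mul inv (e : G) :
  is_topological_group op mul inv e ->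
  forall z : nat -> G,
  (forall W, op W -> W e -> exists N, forall n, (N <= n)%nat -> W (z n)) ->
  Defs.closed_set (subspace_top op (fun x => x <> e))
    (fun y : {x : G | x <> e} => exists n, proj1_sig y = z n).
Proof.
  intros TG z Hz. pose proof TG as (Ht & T1 & _ & _ & _).
  exists (fun g => exists V, op V /\ V g /\ forall n, ~ V (z n)). split.
  - apply open_nbhd; auto. intros g [V [HV [Vg Hn]]]. exists V; split; auto; split; auto.
    intros y Hy. exists V; auto.
  - intros [g Hg]; simpl. split.
    + intros Hnd. apply (avoid_seq op mul inv e TG z Hz g Hg).
      intros n E. apply Hnd. exists n; auto.
    + intros [V [_ [Vg Hn]]] [n E]. rewrite E in Vg. exact (Hn n Vg).
Qed.

Lemma scheme {G : Type} (op : (G -> Prop) -> Prop) mul inv (e : G) :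
  is_topological_group op mul inv e ->
  normal_space (subspace_top op (fun x => x <> e)) ->
  forall dd : nat -> G,
  (forall W, op W -> W e -> exists N, forall n, (N <= n)%nat -> W (dd n)) ->
  (forall n, dd n <> e) ->
  forall O, op O -> (forall n, O (dd n)) ->
  exists W : nat -> G -> Prop, (forall k, op (W k)) /\ (forall k, W k e) /\
    forall g, g <> e -> ~ O g -> exists k, ~ W k g.
Proof.
  intros TG HN dd Hconv Hne O HO HOd.
  pose proof TG as (Ht & T1 & (Ga & Gl & Gr & Gil & Gir) & Hm & Hi).
  pose proof (seq_closed op mul inv e TG dd Hconv) as HD.
  assert (HC : Defs.closed_set (subspace_top op (fun x => x <> e))
                 (fun y : {x : G | x <> e} => ~ O (proj1_sig y))).
  { exists O. split; auto. intros y. split; [apply NNPP | auto]. }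
  destruct (HN _ _ HD HC) as [P [Q [[P' [HP' EP]] [[Q' [HQ' EQ]] [HDP [HCQ HPQ]]]]]].
  { intros y [n E] Hy. apply Hy. rewrite E. auto. }
  exists (fun k h => exists m, (k <= m)%nat /\ P' (mul h (dd m))). split; [|split].
  - intros k. apply union_nat; auto. intros m. exact (rtrans op mul inv e TG (dd m) P' HP').
  - intros k. exists k. split; auto. rewrite Gl.
    apply (EP (exist _ (dd k) (Hne k))). apply HDP. exists k; auto.
  - intros g Hg HOg.
    assert (Qg : Q' g) by (apply (EQ (exist _ g Hg)); apply HCQ; simpl; auto).
    assert (HV : op (fun h => Q' (mul g h) /\ mul g h <> e)).
    { apply (proj1 (proj2 Ht)).
      - exact (ltrans op mul inv e TG g Q' HQ').
      - exact (ltrans op mul inv e TG g _ (open_neq op Ht T1 e)). }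
    assert (Ve : Q' (mul g e) /\ mul g e <> e) by (rewrite Gr; auto).
    destruct (Hconv _ HV Ve) as [k Hk]. exists k. intros [m [Hm' HPm]].
    destruct (Hk m Hm') as [HQm Hnem].
    apply (HPQ (exist _ (mul g (dd m)) Hnem)).
    + apply (EP (exist _ (mul g (dd m)) Hnem)). exact HPm.
    + apply (EQ (exist _ (mul g (dd m)) Hnem)). exact HQm.
Qed.

Definition pt0 : conv_seq_space := exist _ 0 (or_introl eq_refl).
Definition ptn (n : nat) : conv_seq_space :=
  exist _ (/ INR (S n)) (or_intror (ex_intro _ n eq_refl)).

Lemma INRS_pos n : 0 < INR (S n).
Proof. apply lt_0_INR; lia. Qed.

Theorem theorem2p3 (G : Type) (op : (G -> Prop) -> Prop)
  (mul : G -> G -> G) (inv : G -> G) (e : G) :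
  is_topological_group op mul inv e ->
  hereditarily_normal op ->
  has_nontrivial_convergent_sequence op ->
  has_G_delta_diagonal op.
Proof.
  intros TG HN [f [finj [fcont _]]].
  pose proof TG as (Ht & T1 & (Ga & Gl & Gr & Gil & Gir) & Hm & Hi).
  set (p := f pt0). set (x := fun n => f (ptn n)).
  assert (xconv : forall V, op V -> V p -> exists N, forall n, (N <= n)%nat -> V (x n)).
  { intros V HV Vp. destruct (fcont V HV) as [U [RU EU]].
    assert (U0 : U 0) by (apply (EU pt0); exact Vp).
    destruct (RU 0 U0) as [eps [Heps Hball]].
    destruct (inv_small eps Heps) as [N HNn]. exists N. intros n Hn.
    apply (EU (ptn n)). simpl. apply Hball. apply HNn; auto. }
  assert (xinj : forall n m, x n = x m -> n = m).
  { intros n m E. apply finj in E. apply (f_equal (@proj1_sig _ _)) in E. change (/ INR (S n) = / INR (S m)) in E.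
    pose proof (INRS_pos n). pose proof (INRS_pos m).
    assert (INR (S n) = INR (S m)).
    { rewrite <- (Rinv_inv (INR (S n))), <- (Rinv_inv (INR (S m))), E. reflexivity. }
    apply INR_eq in H1. lia. }
  assert (xp : forall n, x n <> p).
  { intros n E. apply finj in E. apply (f_equal (@proj1_sig _ _)) in E. change (/ INR (S n) = 0) in E.
    pose proof (INRS_pos n). apply (Rinv_neq_0_compat (INR (S n))); lra. }
  set (y := fun n => mul (inv p) (x n)).
  assert (py : forall n, mul p (y n) = x n).
  { intros n. unfold y. rewrite Ga, Gir, Gl. reflexivity. }
  assert (yconv : forall W, op W -> W e -> exists N, forall n, (N <= n)%nat -> W (y n)).
  { intros W HW We. apply (xconv (fun h => W (mul (inv p) h))).
    - exact (ltrans op mul inv e TG (inv p) W HW).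
    - rewrite Gil. exact We. }
  assert (yinj : forall n m, y n = y m -> n = m).
  { intros n m E. apply xinj. rewrite <- (py n), <- (py m), E. reflexivity. }
  assert (yne : forall n, y n <> e).
  { intros n E. apply (xp n). rewrite <- (py n), E, Gr. reflexivity. }
  set (d := fun (b : bool) n => y (2 * n + (if b then 0 else 1))%nat).
  assert (dconv : forall b W, op W -> W e -> exists N, forall n, (N <= n)%nat -> W (d b n)).
  { intros b W HW We. destruct (yconv W HW We) as [N HNn]. exists N. intros n Hn.
    unfold d. apply HNn. destruct b; lia. }
  assert (dne : forall b n, d b n <> e) by (intros b n; apply yne).
  assert (ddisj : forall n m, d true n <> d false m).
  { intros n m E. apply yinj in E. lia. }
  pose proof (HN (fun g => g <> e)) as HNZ.
  destruct (HNZ _ _ (seq_closed op mul inv e TG (d true) (dconv true))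
                    (seq_closed op mul inv e TG (d false) (dconv false)))
    as [U1 [U2 [[O1 [HO1 E1]] [[O2 [HO2 E2]] [HD1 [HD2 H12]]]]]].
  { intros z [n En] [m Em]. apply (ddisj n m). rewrite <- En, <- Em. reflexivity. }
  assert (O1d : forall n, O1 (d true n)).
  { intros n. apply (E1 (exist (fun g => g <> e) _ (dne true n))). apply HD1. exists n; reflexivity. }
  assert (O2d : forall n, O2 (d false n)).
  { intros n. apply (E2 (exist (fun g => g <> e) _ (dne false n))). apply HD2. exists n; reflexivity. }
  destruct (scheme op mul inv e TG HNZ (d true) (dconv true) (dne true) O1 HO1 O1d)
    as [W1 [HW1 [W1e W1g]]].
  destruct (scheme op mul inv e TG HNZ (d false) (dconv false) (dne false) O2 HO2 O2d)
    as [W2 [HW2 [W2e W2g]]].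
  set (W := fun k h => W1 k h /\ W2 k h).
  assert (HW : forall k, op (W k)) by (intros k; apply (proj1 (proj2 Ht)); auto).
  assert (We : forall k, W k e) by (intros k; split; auto).
  assert (Wg : forall g, (forall k, W k g) -> g = e).
  { intros g Hg. apply NNPP. intros Hne.
    destruct (classic (O1 g)) as [H1|H1].
    - assert (~ O2 g).
      { intros H2. apply (H12 (exist _ g Hne)).
        - apply (E1 (exist _ g Hne)); auto.
        - apply (E2 (exist _ g Hne)); auto. }
      destruct (W2g g Hne H) as [k Hk]. apply Hk. apply (Hg k).
    - destruct (W1g g Hne H1) as [k Hk]. apply Hk. apply (Hg k). }
  exists (fun k q => W k (mul (inv (fst q)) (snd q))). split.
  - intros k q Hq.
    destruct (Hm (W k) (HW k) (inv (fst q), snd q) Hq) as [A1 [B1 [HA1 [HB1 [A1q [B1q Hbox]]]]]].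
    exists (fun a => A1 (inv a)), B1. split; [exact (Hi A1 HA1)|]. split; auto.
    split; auto. split; auto. intros r Ha Hb. exact (Hbox (inv (fst r), snd r) Ha Hb).
  - intros [a b]; simpl. split.
    + intros ->. intros k. rewrite Gil. auto.
    + intros Hk. apply Wg in Hk.
      rewrite <- (Gl b), <- (Gir a), <- Ga, Hk, Gr. reflexivity.
Qed.
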